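(* Let $A\subseteq\mathbb{R}^n$ be finite (Euclidean metric) and $\beta>0$. For all $r,k>0$: (i) $\mathrm{DCr}^\beta_{r,k}(A)\subseteq\mathrm{Cov}_{(1+\beta^{-1})r,k}(A)$, and (ii) $\mathrm{Cov}_{r,k}(A)\subseteq\mathrm{DCr}^\beta_{\max\{1,2\beta\}r,k}(A)$.
   Context: $d$ Euclidean, $\bar B_d(x,r)=\{y:d(x,y)\le r\}$. For finite $A$, $k>0$, $x\in\mathbb{R}^n$, $\mathrm{core}^A_k(x)$ is the distance from $x$ to its $\lceil k\rceil$-th nearest neighbor in $A$ (each point of $A$ counted once, $x$ itself counting if $x\in A$); equivalently $\min\{r\ge0:|\bar B_d(x,r)\cap A|\ge k\}$, and $\infty$ if $k>|A|$. Multicover: $\mathrm{Cov}_{r,k}(A)=\{x:|\bar B_d(x,r)\cap A|\ge k\}$. For $\beta>0$: $\Lambda^\beta_k(a,x)=\max\{\beta\,\mathrm{core}^A_k(a),d(a,x)\}$, $B^\beta_{r,k}(a)=\{x:\Lambda^\beta_k(a,x)\le r\}$. $\mathrm{Vor}_A(a)=\{x:d(a,x)\le d(a',x)\ \forall a'\in A\}$. Delaunay core bifiltration: $\mathrm{DCr}^\beta_{r,k}(A)=\bigcup_{a\in A}\big(B^\beta_{r,k}(a)\cap\mathrm{Vor}_A(a)\big)$. *)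

(* Defs.v *)
From HB Require Import structures.
From mathcomp Require Import all_boot all_order all_algebra.
From mathcomp Require Import finmap.
From mathcomp Require Import all_classical all_reals all_analysis.
Set Implicit Arguments. Unset Strict Implicit. Unset Printing Implicit Defensive.
Import Order.TTheory GRing.Theory Num.Theory.
Local Open Scope classical_set_scope.
Local Open Scope ring_scope.

Section Delaunay.
Variables (R : realType) (n : nat).
Notation V := 'rV[R]_n.

Definition edist (x y : V) : R := Num.sqrt (\sum_(i < n) (x 0 i - y 0 i) ^+ 2).

Definition ballcount (A : {fset V}) (x : V) (r : R) : nat :=
  size (enum_fset [fset a in A | edist x a <= r]%fset).

(* core^A_k(x) = min { r >= 0 : |B(x,r) ∩ A| >= k }, +oo if no such r
   (the infimum equals the minimum when it is attained; empty set gives +oo) *)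
Definition core (A : {fset V}) (k : R) (x : V) : \bar R :=
  ereal_inf [set r%:E | r in [set r : R | 0 <= r /\ k <= (ballcount A x r)%:R]].

Definition Cov (r k : R) (A : {fset V}) : set V :=
  [set x | k <= (ballcount A x r)%:R].

Definition Lambda (beta : R) (A : {fset V}) (k : R) (a x : V) : \bar R :=
  Order.max (beta%:E * core A k a)%E (edist a x)%:E.

Definition Bball (beta : R) (A : {fset V}) (r k : R) (a : V) : set V :=
  [set x | (Lambda beta A k a x <= r%:E)%E].

Definition Vor (A : {fset V}) (a : V) : set V :=
  [set x | forall a', a' \in A -> edist a x <= edist a' x].

Definition DCr (beta r k : R) (A : {fset V}) : set V :=
  \bigcup_(a in [set a | a \in A]) (Bball beta A r k a `&` Vor A a).

End Delaunay.

(* Main.v *)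
Require Import Defs.
From HB Require Import structures.
From mathcomp Require Import all_boot all_order all_algebra.
From mathcomp Require Import finmap.
From mathcomp Require Import all_classical all_reals all_analysis.
Import Order.TTheory GRing.Theory Num.Theory.
Local Open Scope classical_set_scope.
Local Open Scope ring_scope.
Local Notation edist := Defs.edist.
From mathcomp Require Import ring lra.

Set Implicit Arguments.
Section Aux.
Variables (R : realType) (n : nat).
Notation V := 'rV[R]_n.

Lemma lagrange (u v : 'I_n -> R) :
  (\sum_i u i * v i) ^+ 2 <= (\sum_i u i ^+ 2) * (\sum_i v i ^+ 2).
Proof.
have h1 : (\sum_i u i ^+ 2) * (\sum_i v i ^+ 2) = \sum_i \sum_j u i ^+ 2 * v j ^+ 2.
  by rewrite mulr_suml; apply: eq_bigr => i _; rewrite mulr_sumr.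
have h2 : (\sum_i v i ^+ 2) * (\sum_i u i ^+ 2) = \sum_i \sum_j u j ^+ 2 * v i ^+ 2.
  by rewrite mulr_suml; apply: eq_bigr => i _; rewrite mulr_sumr; apply: eq_bigr => j _; rewrite mulrC.
have h3 : 2 * (\sum_i u i * v i) ^+ 2 = \sum_i \sum_j 2 * (u i * v i) * (u j * v j).
  rewrite expr2 mulr_suml mulr_sumr; apply: eq_bigr => i _.
  by rewrite !mulr_sumr; apply: eq_bigr => j _; ring.
have E : \sum_i \sum_j (u i * v j - u j * v i) ^+ 2 =
   (\sum_i u i ^+ 2) * (\sum_i v i ^+ 2) + (\sum_i v i ^+ 2) * (\sum_i u i ^+ 2)
   - 2 * (\sum_i u i * v i) ^+ 2.
  rewrite h1 h2 h3 -big_split -sumrB /=.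
  apply: eq_bigr => i _.
  rewrite -big_split -sumrB /=.
  by apply: eq_bigr => j _; ring.
have : 0 <= \sum_i \sum_j (u i * v j - u j * v i) ^+ 2.
  by apply: sumr_ge0 => i _; apply: sumr_ge0 => j _; apply: sqr_ge0.
rewrite E (mulrC (\sum_i v i ^+ 2)); lra.
Qed.

Lemma minkowski (a b : 'I_n -> R) :
  Num.sqrt (\sum_i (a i + b i) ^+ 2) <=
  Num.sqrt (\sum_i a i ^+ 2) + Num.sqrt (\sum_i b i ^+ 2).
Proof.
set A := \sum_i a i ^+ 2; set B := \sum_i b i ^+ 2; set W := \sum_i a i * b i.
have A0 : 0 <= A by apply: sumr_ge0 => i _; apply: sqr_ge0.
have B0 : 0 <= B by apply: sumr_ge0 => i _; apply: sqr_ge0.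
have E : \sum_i (a i + b i) ^+ 2 = A + 2 * W + B.
  rewrite /A /B /W mulr_sumr -!big_split /=.
  by apply: eq_bigr => i _; ring.
have HW : W <= Num.sqrt A * Num.sqrt B.
  rewrite -sqrtrM //.
  have [W0|W0] := lerP W 0.
    by apply: le_trans W0 _; apply: sqrtr_ge0.
  rewrite -(ger0_norm (ltW W0)) -sqrtr_sqr ler_sqrt; last by apply: mulr_ge0.
  exact: lagrange.
rewrite E -[X in _ <= X](ger0_norm (addr_ge0 (sqrtr_ge0 A) (sqrtr_ge0 B))).
rewrite -sqrtr_sqr ler_sqrt ?sqr_ge0 // sqrrD !sqr_sqrtr //; lra.
Qed.

Definition ed (x y : V) := edist x y.

Lemma edist_ge0 (x y : V) : 0 <= edist x y.
Proof. exact: sqrtr_ge0. Qed.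

Lemma edistC (x y : V) : edist x y = edist y x.
Proof. rewrite /edist; congr Num.sqrt; apply: eq_bigr => i _; ring. Qed.

Lemma edist_tri (x y z : V) : edist x z <= edist x y + edist y z.
Proof.
rewrite /edist.
have := minkowski (fun i => x 0 i - y 0 i) (fun i => y 0 i - z 0 i).
suff -> : \sum_i (x 0 i - z 0 i) ^+ 2 = \sum_i ((x 0 i - y 0 i) + (y 0 i - z 0 i)) ^+ 2 by [].
by apply: eq_bigr => i _; congr (_ ^+ 2); ring.
Qed.


Lemma bc_mono (A : {fset V}) x y r s :
  (forall b, b \in A -> edist x b <= r -> edist y b <= s) ->
  (ballcount A x r <= ballcount A y s)%N.
Proof.
move=> h; apply: fsubset_leq_card; apply/fsubsetP => b; rewrite !inE /=.
by move=> /andP[bA hb]; rewrite bA h.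
Qed.

Lemma seq_argmax (s : seq V) (f : V -> R) : s != [::] ->
  exists2 b, b \in s & forall c, c \in s -> f c <= f b.
Proof.
elim: s => // x [|y s] IH _.
  by exists x; [rewrite inE | move=> c; rewrite inE => /eqP->].
have [b bin bmax] := IH isT.
case: (lerP (f x) (f b)) => h.
  exists b; first by rewrite inE bin orbT.
  by move=> c; rewrite inE => /predU1P[->|/bmax].
exists x; first by rewrite inE eqxx.
move=> c; rewrite inE => /predU1P[->//|/bmax hc]; exact: le_trans hc (ltW h).
Qed.

Lemma fset_argmax (F : {fset V}) (f : V -> R) (x : V) : x \in F ->
  exists2 b, b \in F & forall c, c \in F -> f c <= f b.
Proof.
move=> xF; have xF' : x \in enum_fset F := xF.
have ne : enum_fset F != [::] by move: xF'; case: (enum_fset F).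
by have [b bin bmax] := @seq_argmax (enum_fset F) f ne; exists b.
Qed.

Lemma fset_ex (F : {fset V}) : (0 < #|` F|)%N -> exists x, x \in F.
Proof.
move=> h; have : enum_fset F != [::] by move: h; case: (enum_fset F).
by case E: (enum_fset F) => [|x s] // _; exists x; rewrite -[x \in F]/(x \in enum_fset F) E mem_head.
Qed.


Lemma core_ub (A : {fset V}) (k : R) a (t : R) : 0 <= t -> k <= (ballcount A a t)%:R ->
  (core A k a <= t%:E)%E.
Proof.
move=> t0 ht; apply: ge_ereal_inf; exists t%:E => //; by exists t.
Qed.

Lemma cnt_pos (A : {fset V}) (k : R) a (s : R) : 0 < k -> k <= (ballcount A a s)%:R ->
  exists b, b \in [fset c in A | edist a c <= s]%fset.
Proof.
move=> k0 hs; apply: fset_ex; rewrite lt0n; apply/eqP => e.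
by move: hs; rewrite /ballcount e mulr0n => hs; lra.
Qed.

Lemma core_att (A : {fset V}) (k : R) a : 0 < k -> core A k a != +oo%E ->
  exists m, [/\ 0 <= m, k <= (ballcount A a m)%:R & (m%:E <= core A k a)%E].
Proof.
move=> k0 hc.
have key : forall s, 0 <= s -> k <= (ballcount A a s)%:R ->
    exists2 b, b \in A & (edist a b <= s /\ k <= (ballcount A a (edist a b))%:R).
  move=> s s0 hs.
  have [x xin] := cnt_pos _ _ _ _ k0 hs.
  have [b bin bmax] := fset_argmax _ (edist a) _ xin.
  move: bin; rewrite !inE /= => /andP[bA bs].
  exists b => //; split => //.
  apply: le_trans hs _; rewrite ler_nat; apply: bc_mono => c cA cs.
  by apply: bmax; rewrite !inE /= cA cs.
have [s [s0 hs]] : exists s, 0 <= s /\ k <= (ballcount A a s)%:R.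
  case: (pselect (exists s, 0 <= s /\ k <= (ballcount A a s)%:R)) => [//|no].
  exfalso; move/eqP: hc; apply; rewrite /core.
  suff -> : [set r%:E | r in [set r : R | 0 <= r /\ k <= (ballcount A a r)%:R]] = set0.
    by rewrite ereal_inf0.
  apply/seteqP; split=> y //= [t [t0 ht] _]; apply: no; by exists t.
have [b0 b0A [_ hb0]] := key s s0 hs.
have b0B : b0 \in [fset b in A | k <= (ballcount A a (edist a b))%:R]%fset.
  by rewrite !inE /= b0A hb0.
have [bm bmin bmax] := fset_argmax _ (fun c => - edist a c) _ b0B.
move: bmin; rewrite !inE /= => /andP[bmA hbm].
exists (edist a bm); split => //; first exact: edist_ge0.
apply/ereal_infP => y [t [t0 ht] <-]; rewrite lee_fin.
have [c cA [ct hc']] := key t t0 ht.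
have := bmax c; rewrite !inE /= cA hc' => /(_ isT) h; lra.
Qed.

End Aux.
Arguments edist_tri {R n}. Arguments edistC {R n}. Arguments cnt_pos {R n}. Arguments core_att {R n}. Arguments fset_argmax {R n}. Arguments core_ub {R n}. Arguments bc_mono {R n}. Arguments edist_ge0 {R n}.

Theorem mainTheorem7 (R : realType) (n : nat) (A : {fset 'rV[R]_n}) (beta : R)
  (hbeta : 0 < beta) :
  forall r k : R, 0 < r -> 0 < k ->
    DCr beta r k A `<=` Cov ((1 + beta^-1) * r) k A /\
    Cov r k A `<=` DCr beta (Num.max 1 (2 * beta) * r) k A.
Proof.
move=> r k r0 k0; split.
- move=> x [a aA [hB hV]].
  move: hB; rewrite /Bball /Lambda /= ge_max => /andP[hc hd].
  rewrite lee_fin in hd.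
  have cfin : core A k a != +oo%E.
    apply/eqP => e; move: hc; rewrite e muleC gt0_mulye ?lte_fin //.
  have [m [m0 hm hmc]] := core_att _ _ _ k0 cfin.
  have hbm : beta * m <= r.
    rewrite -lee_fin EFinM; apply: le_trans hc.
    by rewrite lee_pmul2l ?lte_fin.
  rewrite /Cov /=; apply: le_trans hm _; rewrite ler_nat; apply: bc_mono => b bA hb.
  apply: (le_trans (edist_tri x a b)); rewrite edistC.
  have -> : (1 + beta^-1) * r = r + beta^-1 * r by ring.
  apply: lerD => //; apply: le_trans hb _.
  have -> : m = beta^-1 * (beta * m) by rewrite mulrA mulVf ?mul1r // gt_eqF.
  by apply: ler_wpM2l => //; rewrite invr_ge0 ltW.
- move=> x hx; rewrite /Cov /= in hx.
  have [y yin] := cnt_pos _ _ _ _ k0 hx.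
  move: yin; rewrite !inE /= => /andP[yA yr].
  have [a aA amin] := fset_argmax _ (fun c => - edist c x) _ yA.
  have hax : edist a x <= r.
    by have := amin y yA; rewrite (edistC y x) => h; lra.
  exists a => //; split; last first.
    by move=> a' a'A /=; have := amin a' a'A; lra.
  rewrite /Bball /Lambda /= ge_max; apply/andP; split; last first.
    rewrite lee_fin; apply: le_trans hax _; rewrite -{1}(mul1r r).
    by apply: ler_wpM2r; [exact: ltW | rewrite le_max lexx].
  have hc : (core A k a <= (2 * r)%:E)%E.
    apply: core_ub; first by rewrite mulr_ge0 // ltW.
    apply: le_trans hx _; rewrite ler_nat; apply: bc_mono => b bA hb.
    apply: (le_trans (edist_tri a x b)); lra.
  apply: le_trans (_ : (beta%:E * (2 * r)%:E <= _)%E).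
    by rewrite lee_pmul2l ?lte_fin.
  rewrite -EFinM lee_fin mulrA; apply: ler_wpM2r; first exact: ltW.
  by rewrite le_max (mulrC 2) lexx orbT.
Qed.
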